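(* Let $\mathcal{A}$ be a two-dimensional pVASS and $S$ a BSCC of $\mathscr{C}_\mathcal{A}$ with $t_S(2)<0$. Let $G\in[0,1]^{S\times S}$ be the matrix where $G[q,r]$ is the probability that a run of $\mathcal{A}_2$ starting in $q(1)$ visits $r(0)$ before visiting any configuration $r'(0)$ with $r'\ne r$. Then the directed graph of $G$ (edge $q\to r$ iff $G[q,r]>0$) has exactly one bottom strongly connected component.
   Context: A pVASS of dimension $d$ is $\mathcal{A}=(Q,\gamma,W)$ ($Q$ finite, rules $\gamma\subseteq Q\times\{-1,0,1\}^d\times Q$, weights $W:\gamma\to\mathbb{N}^+$), with the standing assumption that the graph on $Q$ induced by rules is weakly connected and between two states there is at most one rule. Configurations $p\vec v\in Q\times\mathbb{N}^d$; a rule $(p,\kappa,q)$ is enabled if $\vec v_i>0$ whenever $\kappa_i=-1$; the Markov chain on configurations has a self-loop with probability 1 if no rule is enabled, and otherwise each enabled rule of weight $\ell$ gives $p\vec v\to q(\vec v+\kappa)$ with probability $\ell/T$, $T$ total enabled weight. $\mathscr{C}_\mathcal{A}$: finite Markov chain on $Q$ with $p\to q$ with probability $W((p,\kappa,q))/T_p$ ($T_p$ total weight of rules from $p$); BSCC = bottom strongly connected component; for a BSCC $S$, $\mu_S$ is its invariant distribution and the trend is $t_S=\sum_{s\in S}\mu_S(s)\sum_{(s,\kappa,t)\in\gamma}\kappa W((s,\kappa,t))/T_s$. $\mathcal{A}_2$ is the one-dimensional pVASS with a rule $(s,\kappa(2),t)$ of weight $\ell$ for each rule $(s,\kappa,t)$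 of weight $\ell$ of $\mathcal{A}$ (configurations $q(k)$, $k\in\mathbb{N}$). (Because $t_S(2)<0$, $G$ is stochastic.) *)

(* Defs.v *)
From Stdlib Require Import Reals Relations.
From mathcomp Require Import all_boot.

Set Implicit Arguments.
Unset Strict Implicit.
Unset Printing Implicit Defensive.

Inductive upd := Dm | D0 | Dp.

Definition upd_val (u : upd) : Z :=
  match u with Dm => (-1)%Z | D0 => 0%Z | Dp => 1%Z end.

(* Since between two
   states there is at most one rule, the rule set is a partial function
   Q -> Q -> option (kappa, weight), kappa in {-1,0,1}^2, weight in N^+. *)
Record pVASS2 (Q : finType) := PVASS2 {
  rule : Q -> Q -> option ((upd * upd) * nat);
  weight_pos : forall p q k w, rule p q = Some (k, w) -> (0 < w)%N;
  weakly_connected : forall p q : Q,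
    connect (fun x y => isSome (rule x y) || isSome (rule y x)) p q
}.

Section Defs.
Local Open Scope R_scope.
Variables (Q : finType) (A : pVASS2 Q).

Definition rsum (F : Q -> R) : R :=
  foldr (fun t acc => Rplus (F t) acc) R0 (enum Q).

Definition W (p q : Q) : nat :=
  match rule A p q with Some (_, w) => w | None => 0%N end.

Definition kappa2 (p q : Q) : Z :=
  match rule A p q with Some ((_, u), _) => upd_val u | None => 0%Z end.

Definition Tot (p : Q) : nat := \sum_(t : Q) W p t.

Definition PC (p q : Q) : R :=
  if Tot p == 0%N then (if p == q then R1 else R0)
  else (INR (W p q) / INR (Tot p)).

Definition edgeC (p q : Q) : bool := isSome (rule A p q).

Definition is_bscc (V : {set Q}) (E : Q -> Q -> Prop) (B : {set Q}) : Prop :=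
  [/\ B != set0, B \subset V,
      (forall p q, p \in B -> q \in B -> clos_refl_trans Q E p q) &
      (forall p q, p \in B -> E p q -> q \in B)].

Definition bscc_C (S : {set Q}) : Prop :=
  is_bscc [set: Q] (fun p q => edgeC p q) S.

Definition invariant_dist (S : {set Q}) (mu : Q -> R) : Prop :=
  [/\ (forall q, 0 <= mu q),
      (forall q, q \notin S -> mu q = R0),
      rsum mu = R1 &
      (forall q, mu q = rsum (fun p => mu p * PC p q))].

Definition trend2 (mu : Q -> R) : R :=
  rsum (fun s => mu s * rsum (fun t => IZR (kappa2 s t) * PC s t)).

Definition enabled2 (s t : Q) (k : nat) : bool :=
  match rule A s t with
  | Some ((_, u), _) => (0 < k)%N || (if u is Dm then false else true)
  | None => false
  end.

Definition Ten2 (s : Q) (k : nat) : nat :=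
  \sum_(t : Q) (if enabled2 s t k then W s t else 0%N).

Definition next2 (s t : Q) (k : nat) : nat :=
  match rule A s t with
  | Some ((_, Dm), _) => k.-1
  | Some ((_, Dp), _) => k.+1
  | _ => k
  end.

(* hit_n r n p k = probability that the run of A_2 from p(k) visits, within
   n steps, a configuration with counter 0, and the first such configuration
   is r(0). *)
Fixpoint hit_n (r : Q) (n : nat) (p : Q) (k : nat) : R :=
  if k == 0%N then (if p == r then R1 else R0) else
  match n with
  | 0 => R0
  | n'.+1 =>
      if Ten2 p k == 0%N then hit_n r n' p k      (* self-loop *)
      else rsum (fun t =>
             if enabled2 p t k
             then (INR (W p t) / INR (Ten2 p k) * hit_n r n' t (next2 p t k))
             else R0)
  end.

(* The set of values {hit_n r n q 1 | n}; these are probabilities (<= 1),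
   the Rmin only serves to make boundedness trivial. *)
Definition hit_set (q r : Q) : R -> Prop :=
  fun x => exists n, x = Rmin 1 (hit_n r n q 1).

Lemma hit_set_bound q r : bound (hit_set q r).
Proof. exists R1; intros x [n ->]; apply Rmin_l. Qed.

Lemma hit_set_ne q r : exists x, hit_set q r x.
Proof. exists (Rmin 1 (hit_n r 0 q 1)); exists 0%N; reflexivity. Qed.

(* G[q,r] = probability that a run of A_2 from q(1) visits r(0) before any
   r'(0) with r' <> r  ( = sup_n of the nondecreasing n-step probabilities ). *)
Definition G (q r : Q) : R :=
  proj1_sig (completeness (hit_set q r) (hit_set_bound q r) (hit_set_ne q r)).

Definition edgeG (S : {set Q}) (q r : Q) : Prop :=
  q \in S /\ r \in S /\ (G q r > 0).

End Defs.

(* Main.v *)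
Require Import Defs.
From Stdlib Require Import Reals Relations Lra Lia ZArith Classical IndefiniteDescription ClassicalDescription.
From mathcomp Require Import all_boot zify.
Set Implicit Arguments.
Unset Strict Implicit.
Unset Printing Implicit Defensive.

Lemma sum_enum (Q : finType) (F : Q -> nat) : \sum_(t : Q) F t = \sum_(t <- enum Q) F t.
Proof. by rewrite big_enum /=; apply: eq_bigl => x; rewrite inE. Qed.

Section L.
Local Open Scope R_scope.
Fixpoint lsum {T} (l : seq T) (F : T -> R) : R :=
  match l with [::] => 0 | x :: l' => F x + lsum l' F end.

Lemma rsumE (Q : finType) F : rsum F = lsum (enum Q) F.
Proof. rewrite /rsum; elim: (enum Q) => //= x l ->; reflexivity. Qed.

Lemma lsum_add {T} (l : seq T) F G : lsum l (fun x => F x + G x) = lsum l F + lsum l G.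
Proof. elim: l => /= [|x l ->]; lra. Qed.
Lemma lsum_scal {T} (l : seq T) c F : lsum l (fun x => c * F x) = c * lsum l F.
Proof. elim: l => /= [|x l ->]; lra. Qed.
Lemma lsum_ext {T} (l : seq T) F G : (forall x, F x = G x) -> lsum l F = lsum l G.
Proof. move=> H; elim: l => /= [|x l ->] //; by rewrite H. Qed.
Lemma lsum_le {T} (l : seq T) F G : (forall x, F x <= G x) -> lsum l F <= lsum l G.
Proof. move=> H; elim: l => /= [|x l IH]; [lra|]. have := H x; lra. Qed.
Lemma lsum_swap {T U} (l : seq T) (m : seq U) F :
  lsum l (fun x => lsum m (fun y => F x y)) = lsum m (fun y => lsum l (fun x => F x y)).
Proof.
elim: l => /= [|x l ->]. { elim: m => //= y m <-; lra. }
by rewrite -lsum_add.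
Qed.
Lemma lsum_pos {T : eqType} (l : seq T) F t : (forall x, 0 <= F x) -> t \in l -> 0 < F t -> 0 < lsum l F.
Proof.
move=> H; elim: l => //= x l IH; rewrite inE => /orP [/eqP <-|tl] Ht.
- have : 0 <= lsum l F by (elim: l {IH} => /= [|y l IH']; [lra| have := H y; lra]). lra.
- have := IH tl Ht; have := H x; lra.
Qed.
Lemma lsum_nonneg {T} (l : seq T) F : (forall x, 0 <= F x) -> 0 <= lsum l F.
Proof. move=> H; elim: l => /= [|y l IH']; [lra| have := H y; lra]. Qed.
Lemma lsum_INR {T} (l : seq T) (F : T -> nat) : lsum l (fun x => INR (F x)) = INR (\sum_(t <- l) F t).
Proof. elim: l => /= [|x l ->]; first by rewrite big_nil. by rewrite big_cons plus_INR. Qed.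
Lemma lsum_delta {T : eqType} (l : seq T) s : uniq l -> s \in l ->
  lsum l (fun t => if s == t then 1 else 0) = 1.
Proof.
elim: l => //= x l IH /andP [xl ul]; rewrite inE => /orP [/eqP ->|sl].
- rewrite eqxx; suff -> : lsum l (fun t => if x == t then 1 else 0) = 0 by lra.
  elim: l {IH ul} xl => //= y l IH; rewrite inE negb_or => /andP [xy xl].
  rewrite (negbTE xy) IH //; lra.
- rewrite IH //; case: eqP => E; last lra.
  by move: xl; rewrite -E sl.
Qed.
End L.
Section S_P2.

Inductive fhl (Q : finType) (A : pVASS2 Q) (j : nat) : Q -> nat -> Q -> Prop :=
| fhl0 r : fhl A j r j r
| fhlS p k t r : (j < k)%N -> edgeC A p t -> fhl A j t (next2 A p t k) r -> fhl A j p k r.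

Inductive run (Q : finType) (A : pVASS2 Q) : Q -> nat -> Q -> nat -> Prop :=
| run0 p k : run A p k p k
| runS p k t q k2 : (0 < k)%N -> edgeC A p t -> run A t (next2 A p t k) q k2 -> run A p k q k2.

Fixpoint weff (Q : finType) (A : pVASS2 Q) (p : Q) (l : seq Q) : Z :=
  match l with [::] => 0%Z | t :: l' => (kappa2 A p t + weff A t l')%Z end.

Lemma next2Z (Q : finType) (A : pVASS2 Q) p t k : (0 < k)%N ->
  Z.of_nat (next2 A p t k) = (Z.of_nat k + kappa2 A p t)%Z.
Proof.
rewrite /next2 /kappa2; case: (rule A p t) => [[[a u] w]|]; last by lia.
case: u; case: k => [|k] // _; cbn -[Z.of_nat]; lia.
Qed.

Lemma kappa2_ge (Q : finType) (A : pVASS2 Q) p t : (-1 <= kappa2 A p t)%Z.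
Proof. rewrite /kappa2; case: (rule A p t) => [[[a u] w]|]; last by lia. case: u; cbn; lia. Qed.
Lemma kappa2_le (Q : finType) (A : pVASS2 Q) p t : (kappa2 A p t <= 1)%Z.
Proof. rewrite /kappa2; case: (rule A p t) => [[[a u] w]|]; last by lia. case: u; cbn; lia. Qed.

Lemma next2_shift (Q : finType) (A : pVASS2 Q) p t k m : (0 < k)%N ->
  next2 A p t (k + m) = (next2 A p t k + m)%N.
Proof.
rewrite /next2; case: (rule A p t) => [[[a u] w]|] //.
case: u => //=; case: k => [|k] //= _.
Qed.

Lemma fhl_shift (Q : finType) (A : pVASS2 Q) J p K r : fhl A J p K r ->
  forall j k m, J = (j + m)%N -> K = (k + m)%N -> fhl A j p k r.
Proof.
elim => [r' | p' k' t r' jk e _ IH] j k m EJ EK.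
- subst; have -> : k = j by lia. constructor.
- subst; apply: (fhlS (t := t)) => //; first by lia.
  apply: (IH j _ m) => //. rewrite next2_shift //; lia.
Qed.

Lemma fhl_split (Q : finType) (A : pVASS2 Q) j p k r : fhl A j p k r ->
  forall m, (j < m)%N -> (m <= k)%N -> exists s, fhl A m p k s /\ fhl A j s m r.
Proof.
elim => [r'|p' k' t r' jk e H IH] m jm mk.
- lia.
- case: (ltnP m k') => mk'.
  + have Hn : (m <= next2 A p' t k')%N.
      have := next2Z A p' t (k := k') ltac:(lia); have := @kappa2_ge _ A p' t; lia.
    have [s [H1 H2]] := IH m jm Hn.
    exists s; split => //. by apply: (fhlS (t := t)).
  + have -> : m = k' by lia. exists p'; split; first constructor.
    by apply: (fhlS (t := t)).
Qed.

Lemma run_fh (Q : finType) (A : pVASS2 Q) p k q k2 r : run A p k q k2 -> fhl A 0 q k2 r -> fhl A 0 p k r.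
Proof. elim => // p' k' t q' k2' kp e _ IH H. apply: (fhlS (t := t)) => //; by apply: IH. Qed.

Lemma run_trans (Q : finType) (A : pVASS2 Q) p k q k2 s k3 : run A p k q k2 -> run A q k2 s k3 -> run A p k s k3.
Proof. elim => // p' k' t q' k2' kp e _ IH H. apply: (runS (t := t)) => //; by apply: IH. Qed.

Lemma walk_run (Q : finType) (A : pVASS2 Q) l p k : path (edgeC A) p l -> (size l < k)%N ->
  exists k2, run A p k (last p l) k2 /\ Z.of_nat k2 = (Z.of_nat k + weff A p l)%Z.
Proof.
elim: l p k => [|t l IH] p k; first by (exists k; split; [constructor| cbn -[Z.of_nat]; lia]).
rewrite [path _ _ _]/= [size _]/= [last _ _]/= [weff _ _ _]/=.
move=> /andP [e pl] sk.
have kp : (0 < k)%N by lia.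
have := next2Z A p t kp => Hn.
have := @kappa2_ge _ A p t => Hg.
have [k2 [R E]] := IH t (next2 A p t k) pl ltac:(lia).
exists k2; split; first by apply: (runS (t := t)).
lia.
Qed.

Lemma walk_descent (Q : finType) (A : pVASS2 Q) l p k : path (edgeC A) p l -> (0 < k)%N ->
  (exists r, fhl A 0 p k r) \/
  (exists k2, run A p k (last p l) k2 /\ (0 < k2)%N /\ Z.of_nat k2 = (Z.of_nat k + weff A p l)%Z).
Proof.
elim: l p k => [|t l IH] p k; first by (right; exists k; split; [constructor| cbn -[Z.of_nat]; lia]).
rewrite [path _ _ _]/= [last _ _]/= [weff _ _ _]/=.
move=> /andP [e pl] kp.
have := next2Z A p t kp => Hn.
case E0: (next2 A p t k) => [|n].
- left; exists t; apply: (fhlS (t := t)) => //; rewrite E0; constructor.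
- have [[r Hr]|[k2 [R [k2p E]]]] := IH t (next2 A p t k) pl ltac:(lia).
  + left; exists r; apply: (fhlS (t := t)) => //.
  + right; exists k2; split; first by apply: (runS (t := t)).
    split => //; lia.
Qed.
End S_P2.
Section S_P3.
Local Open Scope R_scope.

Lemma Rdiv_nonneg a b : 0 <= a -> 0 < b -> 0 <= a / b.
Proof. move=> ha hb; apply: Rmult_le_pos => //; left; exact: Rinv_0_lt_compat. Qed.

Lemma hit_nonneg (Q : finType) (A : pVASS2 Q) r n : forall p k, 0 <= hit_n A r n p k.
Proof.
elim: n => [|n IH] p k /=.
- case: (k == 0%N); [case: (p == r)|]; lra.
- case: (k == 0%N); [case: (p == r); lra|].
  case: (Ten2 A p k == 0%N); first by apply: IH.
  rewrite rsumE; apply: lsum_nonneg => t; case: (enabled2 A p t k); last lra.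
  apply: Rmult_le_pos; last by apply: IH.
  have := pos_INR (W A p t); have := pos_INR (Ten2 A p k).
  move=> h1 h2; case: (Req_dec (INR (Ten2 A p k)) 0) => [->|h3].
  + rewrite /Rdiv Rinv_0; lra.
  + apply: Rdiv_nonneg; lra.
Qed.

Lemma edge_W (Q : finType) (A : pVASS2 Q) p t : edgeC A p t -> (0 < W A p t)%N.
Proof.
rewrite /edgeC /W; case E: (rule A p t) => [[kk w]|] //= _.
exact: weight_pos E.
Qed.

Lemma edge_enabled (Q : finType) (A : pVASS2 Q) p t k : (0 < k)%N -> edgeC A p t -> enabled2 A p t k.
Proof.
rewrite /edgeC /enabled2; case E: (rule A p t) => [[[a u] w]|] //= kp _.
by rewrite kp.
Qed.

Lemma Ten2_pos (Q : finType) (A : pVASS2 Q) p t k : (0 < k)%N -> edgeC A p t -> (W A p t <= Ten2 A p k)%N.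
Proof.
move=> kp e; rewrite /Ten2 (bigD1 t) //= edge_enabled //; exact: leq_addr.
Qed.

Lemma fh_hit (Q : finType) (A : pVASS2 Q) p k r : fhl A 0 p k r -> exists n, 0 < hit_n A r n p k.
Proof.
elim => [r'|p' k' t r' kp e _ [n IH]].
- exists 0%N; rewrite /= eqxx; lra.
- exists n.+1; rewrite /=.
  have -> : (k' == 0%N) = false by lia.
  have hW := edge_W e; have hT := Ten2_pos kp e.
  have -> : (Ten2 A p' k' == 0%N) = false by lia.
  rewrite rsumE; apply: (@lsum_pos _ _ _ t).
  + move=> x; case: (enabled2 A p' x k'); last lra.
    apply: Rmult_le_pos; last by apply: hit_nonneg.
    apply: Rdiv_nonneg; [apply: pos_INR| apply: lt_0_INR; lia].
  + by rewrite mem_enum.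
  + rewrite edge_enabled //; apply: Rmult_lt_0_compat => //.
    apply: Rdiv_lt_0_compat; apply: lt_0_INR; lia.
Qed.

Lemma G_pos (Q : finType) (A : pVASS2 Q) q r n : 0 < hit_n A r n q 1 -> 0 < G A q r.
Proof.
move=> h; rewrite /G; case: (completeness _ _ _) => g [ub _] /=.
have : hit_set A q r (Rmin 1 (hit_n A r n q 1)) by exists n.
move=> /ub; have : 0 < Rmin 1 (hit_n A r n q 1) by apply: Rmin_glb_lt; lra.
lra.
Qed.
End S_P3.
Section S_P4.

Lemma crt_path (Q : finType) (A : pVASS2 Q) p q :
  clos_refl_trans Q (fun p q => edgeC A p q) p q -> exists l, path (edgeC A) p l /\ last p l = q.
Proof.
elim => [x y e| x| x y z _ [l1 [h1 e1]] _ [l2 [h2 e2]]].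
- by exists [:: y]; rewrite /= e.
- by exists [::].
- exists (l1 ++ l2); by rewrite cat_path last_cat e1 h1 h2 e2.
Qed.

Lemma weff_cat (Q : finType) (A : pVASS2 Q) l1 l2 p :
  weff A p (l1 ++ l2) = (weff A p l1 + weff A (last p l1) l2)%Z.
Proof. elim: l1 p => [|t l IH] p /=; first lia. rewrite IH; lia. Qed.

Lemma weff_bound (Q : finType) (A : pVASS2 Q) l p :
  (- Z.of_nat (size l) <= weff A p l <= Z.of_nat (size l))%Z.
Proof.
elim: l p => [|t l IH] p; first (cbn; lia).
rewrite [weff _ _ _]/= [size _]/=. have := IH t. have := @kappa2_ge _ A p t.
have := @kappa2_le _ A p t. lia.
Qed.

Lemma Zmin_ex (P : Z -> Prop) b : (exists z, P z) -> (forall z, P z -> (b <= z)%Z) ->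
  exists z, P z /\ forall y, P y -> (z <= y)%Z.
Proof.
move=> [z0 Pz0] Hb; apply: NNPP => Hno.
have H : forall n : nat, forall z, P z -> (b + Z.of_nat n <= z)%Z.
{ elim => [|n IH] z Pz; first by (have := Hb z Pz; lia).
  have := IH z Pz; case: (Z.eq_dec z (b + Z.of_nat n)) => [E|NE] h; last lia.
  exfalso; apply: Hno; exists z; split => // y Py; have := IH y Py; lia. }
have := H (Z.to_nat (z0 - b + 1)) z0 Pz0; have := Hb z0 Pz0; lia.
Qed.

Section Neg.
Local Open Scope R_scope.

Lemma PC_nonneg (Q : finType) (A : pVASS2 Q) s t : 0 <= PC A s t.
Proof.
rewrite /PC; case: eqP => h; first by case: (s == t); [exact: Rle_0_1 | exact: Rle_refl].
apply: Rdiv_nonneg; first exact: pos_INR. apply: lt_0_INR; lia.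
Qed.

Lemma PC_sum (Q : finType) (A : pVASS2 Q) s : lsum (enum Q) (fun t => PC A s t) = 1.
Proof.
rewrite /PC; case: eqP => h.
- apply: lsum_delta; [exact: enum_uniq| by rewrite mem_enum].
- have hT : INR (Tot A s) <> 0 by apply: not_0_INR.
  rewrite (@lsum_ext _ _ _ (fun t => / INR (Tot A s) * INR (W A s t))); last first.
    move=> t; rewrite /Rdiv; lra.
  rewrite lsum_scal lsum_INR -sum_enum -/(Tot A s). by field.
Qed.

Lemma neg_cycle (Q : finType) (A : pVASS2 Q) (S : {set Q}) mu c0 :
  (forall p q, p \in S -> edgeC A p q -> q \in S) ->
  (forall p q, p \in S -> q \in S -> clos_refl_trans Q (fun p q => edgeC A p q) p q) ->
  c0 \in S -> invariant_dist A S mu -> trend2 A mu < 0 ->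
  exists l, path (edgeC A) c0 l /\ last c0 l = c0 /\ (weff A c0 l < 0)%Z.
Proof.
move=> Hcl Hconn c0S [mu0 muS mu1 muinv] Htr.
apply: NNPP => Hno.
have Hpos : forall l, path (edgeC A) c0 l -> last c0 l = c0 -> (0 <= weff A c0 l)%Z.
{ move=> l h1 h2; case: (Z.le_gt_cases 0 (weff A c0 l)) => // h3; exfalso; apply: Hno; exists l; split=>//; split=>//; lia. }
have Hex : forall p, exists z, p \in S ->
   (exists l, path (edgeC A) c0 l /\ last c0 l = p /\ weff A c0 l = z) /\
   (forall l, path (edgeC A) c0 l -> last c0 l = p -> (z <= weff A c0 l)%Z).
{ move=> p; case: (boolP (p \in S)) => pS; last by exists 0%Z.
  have [l' [h1' h2']] := crt_path (Hconn p c0 pS c0S).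
  have [l0 [h10 h20]] := crt_path (Hconn c0 p c0S pS).
  have [z [[l [h1 [h2 h3]]] hz]] := @Zmin_ex
     (fun z => exists l, path (edgeC A) c0 l /\ last c0 l = p /\ weff A c0 l = z)
     (- weff A p l')%Z ltac:(by exists (weff A c0 l0); exists l0)
     ltac:(move=> z [l [h1 [h2 h3]]]; have := Hpos (l ++ l');
           rewrite cat_path last_cat weff_cat h1 h2 h1' h2' => /(_ isT erefl); lia).
  exists z => _; split; first by exists l.
  move=> l2 a b; apply: hz; by exists l2. }
pose phi p := proj1_sig (constructive_indefinite_description _ (Hex p)).
have Hphi : forall p, p \in S -> _ := fun p => proj2_sig (constructive_indefinite_description _ (Hex p)).
have Hedge : forall s t, s \in S -> edgeC A s t -> (phi t <= phi s + kappa2 A s t)%Z.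
{ move=> s t sS e; have tS := Hcl s t sS e.
  have [[l [h1 [h2 h3]]] _] := Hphi s sS.
  have [_ h] := Hphi t tS.
  have := h (rcons l t); rewrite rcons_path last_rcons h1 h2 e -cats1 weff_cat h2 /=.
  move=> /(_ isT erefl). rewrite /phi in h3 *. lia. }
have Hterm : forall s t, s \in S ->
   IZR (phi t - phi s) * PC A s t <= IZR (kappa2 A s t) * PC A s t.
{ move=> s t sS; case e: (edgeC A s t).
  - apply: Rmult_le_compat_r; first exact: PC_nonneg.
    apply: IZR_le; have := Hedge s t sS e; lia.
  - move: e; rewrite /edgeC /kappa2 /PC /W; case: (rule A s t) => // _.
    case: eqP => _.
    2: { rewrite (_ : INR 0 = 0) //; nra. }
    case: eqP => [<-|_]; last lra. rewrite Z.sub_diag; lra. }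
have Hge : 0 <= trend2 A mu.
{ apply: (Rle_trans _ (rsum (fun s => mu s * rsum (fun t => IZR (phi t - phi s) * PC A s t)))).
  - rewrite !rsumE.
    rewrite (@lsum_ext _ _ _ (fun s => lsum (enum Q) (fun t => mu s * PC A s t * IZR (phi t)) +
              (-1) * (mu s * IZR (phi s)))); last first.
    { move=> s /=; rewrite rsumE -lsum_scal.
      rewrite (@lsum_ext _ _ _ (fun t => (mu s * PC A s t * IZR (phi t)) + (- (mu s * IZR (phi s))) * PC A s t)); last first.
        move=> t; rewrite minus_IZR; lra.
      rewrite lsum_add lsum_scal PC_sum Rmult_1_r; congr (_ + _); ring. }
    rewrite lsum_add lsum_scal lsum_swap.
    rewrite (@lsum_ext _ _ _ (fun t => IZR (phi t) * lsum (enum Q) (fun s => mu s * PC A s t))); last first.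
      move=> t; rewrite -lsum_scal; apply: lsum_ext => s; lra.
    rewrite (@lsum_ext _ _ (fun t => IZR (phi t) * lsum (enum Q) (fun s => mu s * PC A s t))
                 (fun t => mu t * IZR (phi t))); last first.
      move=> t; rewrite (muinv t) rsumE; lra.
    lra.
  - rewrite /trend2 !rsumE; apply: lsum_le => s.
    case: (boolP (s \in S)) => sS; last by (rewrite muS //; lra).
    apply: Rmult_le_compat_l; first exact: mu0.
    rewrite !rsumE; apply: lsum_le => t; exact: Hterm. }
lra.
Qed.
End Neg.
End S_P4.
Section S_P5.

Lemma fhl_in (Q : finType) (A : pVASS2 Q) (S : {set Q}) j p k r :
  (forall p q, p \in S -> edgeC A p q -> q \in S) ->
  fhl A j p k r -> p \in S -> r \in S.
Proof. move=> Hcl; elim => // p' k' t r' _ e _ IH pS; apply: IH; exact: Hcl e. Qed.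

Lemma fh_Gstar (Q : finType) (A : pVASS2 Q) (S : {set Q}) :
  (forall p q, p \in S -> edgeC A p q -> q \in S) ->
  forall k p r, fhl A 0 p k r -> p \in S -> clos_refl_trans Q (edgeG A S) p r.
Proof.
move=> Hcl; elim => [|k IH] p r H pS.
- inversion H; subst; first by apply: rt_refl. lia.
- have edge1 : forall p s, fhl A 0 p 1 s -> p \in S -> edgeG A S p s.
  { move=> p0 s H0 p0S; split => //; split; first exact: fhl_in Hcl H0 p0S.
    have [n hn] := fh_hit H0; exact: G_pos hn. }
  case: k IH H => [|k] IH H; first by apply: rt_step; exact: edge1.
  have [s [H1 H2]] := fhl_split H (m := k.+1) ltac:(lia) ltac:(lia).
  have H1' : fhl A 0 p 1 s by apply: (fhl_shift H1 (m := k.+1)); lia.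
  apply: (rt_trans _ _ _ s); first by apply: rt_step; exact: edge1.
  apply: IH H2 _; exact: fhl_in Hcl H1' pS.
Qed.

Lemma common_target (Q : finType) (A : pVASS2 Q) (S : {set Q}) mu :
  bscc_C A S -> invariant_dist A S mu -> Rlt (trend2 A mu) R0 ->
  exists rs, rs \in S /\ forall q, q \in S -> clos_refl_trans Q (edgeG A S) q rs.
Proof.
move=> [Sne _ Hconn Hcl] Hinv Htr.
have [c0 c0S] := set0Pn _ Sne.
have [C [hC [lC nC]]] := neg_cycle Hcl Hconn c0S Hinv Htr.
have desc : forall n k, (k <= n)%N -> exists r, fhl A 0 c0 k r.
{ elim => [|n IH] k kn.
  - have -> : k = 0%N by lia. exists c0; constructor.
  - case: k kn => [|k] kn; first by exists c0; constructor.
    have [[r Hr]|[k2 [R [k2p E]]]] := walk_descent hC (k := k.+1) isT.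
    + by exists r.
    + rewrite lC in R. have [r Hr] := IH k2 ltac:(lia). exists r; exact: run_fh R Hr. }
pose M0 := (size C).+1.
pose dn := Z.to_nat (- weff A c0 C).
have dnE : Z.of_nat dn = (- weff A c0 C)%Z by rewrite /dn; lia.
have M0E : M0 = (size C).+1 by [].
clearbody M0 dn.
have [rs Hrs] := desc M0 M0 (leqnn _).
have Hper : forall i, fhl A 0 c0 (M0 + dn * i) rs.
{ elim => [|i IH]; first by rewrite muln0 addn0.
  have [k2 [R E]] := walk_run hC (k := M0 + dn * i.+1) ltac:(nia).
  rewrite lC in R. have Ek : k2 = (M0 + dn * i)%N by nia.
  rewrite Ek in R; exact: run_fh R IH. }
exists rs; split; first exact: fhl_in Hcl Hrs c0S.
move=> q qS.
have [l [hl ll]] := crt_path (Hconn q c0 qS c0S).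
have Hb := weff_bound A l q.
pose k := Z.to_nat (Z.of_nat (M0 + dn * (2 * size l)) - weff A q l).
have kE : Z.of_nat k = (Z.of_nat (M0 + dn * (2 * size l)) - weff A q l)%Z by rewrite /k; nia.
clearbody k.
have [k2 [R E]] := walk_run hl (k := k) ltac:(nia).
rewrite ll in R. have Ek : k2 = (M0 + dn * (2 * size l))%N by nia.
rewrite Ek in R.
apply: (fh_Gstar Hcl (k := k)) => //; exact: run_fh R (Hper _).
Qed.

Lemma crtG_in (Q : finType) (A : pVASS2 Q) (S B : {set Q}) a b :
  clos_refl_trans Q (edgeG A S) a b -> a \in B ->
  (forall p q, p \in B -> edgeG A S p q -> q \in B) -> b \in B.
Proof.
move=> H; elim: H => [x y e|x|x y z _ IH1 _ IH2] aB Hcl //.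
- exact: Hcl e.
- apply: IH2 => //; exact: IH1.
Qed.

Theorem mainTheorem20 (Q : finType) (A : pVASS2 Q) (S : {set Q}) (mu : Q -> R) :
  bscc_C A S ->
  invariant_dist A S mu ->
  Rlt (trend2 A mu) R0 ->
  exists! B : {set Q}, is_bscc S (edgeG A S) B.
Proof.
move=> Hb Hinv Htr.
have [rs [rsS Hrs]] := common_target Hb Hinv Htr.
pose P x := clos_refl_trans Q (edgeG A S) rs x.
pose B := [set x | if excluded_middle_informative (P x) then true else false].
have inB : forall x, x \in B <-> P x.
{ move=> x; rewrite inE; case: excluded_middle_informative => //. }
have PS : forall x, P x -> x \in S.
{ move=> x H; exact: (crtG_in H rsS (fun p q _ e => proj1 (proj2 e))). }
exists B; split.
- split.
  + apply/set0Pn; exists rs; apply/inB; apply: rt_refl.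
  + apply/subsetP => x /inB; exact: PS.
  + move=> p q /inB pB /inB qB; apply: (rt_trans _ _ _ rs) => //; exact: Hrs (PS _ pB).
  + move=> p q /inB pB e; apply/inB; apply: (rt_trans _ _ _ p) => //; exact: rt_step.
- move=> B' [B'ne B'S B'conn B'cl].
  have [x xB'] := set0Pn _ B'ne.
  have rsB' : rs \in B'.
  { apply: (crtG_in (Hrs x _)) => //. exact: (subsetP B'S). }
  apply/setP => y; apply/idP/idP.
  + move=> /inB Py; exact: (crtG_in Py rsB').
  + move=> yB'; apply/inB; exact: B'conn.
Qed.
End S_P5.
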